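(* For $z\in(0,\tfrac14)$ and $x\in[0,1]$, the function $f(z,x)=\sum_{n\ge0}P_n(x)z^n$ is given by $$f(z,x)=\Big[\sqrt{2zx+1-2z}\;S\Big(\sqrt{\tfrac{2zx+1-2z}{1-2z}}\Big)\Big]^{-1}.$$
   Context: The polynomials $P_n,Q_n$ on $[0,1]$ are defined by $Q_0=P_0=1$, $Q_{n+1}(x)=\sum_{m=0}^n\big[\int_x^1Q_m(t)dt\big]Q_{n-m}(x)$, $P_{n+1}(x)=\sum_{m=0}^n\big[\int_0^xP_m(t)dt+\int_x^1Q_m(t)dt\big]P_{n-m}(x)$. Let $T(t)=\int_t^1\frac{s\,ds}{s^2-s+1}=-\tfrac12\log(t^2-t+1)-\tfrac{\sqrt3}{3}\big[\arctan\big(\tfrac{2t-1}{\sqrt3}\big)-\tfrac{\pi}{6}\big]$; $t\mapsto e^{T(t)}$ is a strictly decreasing bijection $[0,\infty)\to(0,e^{\sqrt3\pi/9}]$, and $S$ denotes its inverse function. *)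

(* Defs.v *)
From Stdlib Require Import Reals List ClassicalEpsilon.
Import ListNotations.
Open Scope R_scope.

(* Riemann integral of f over [a,b] (Stdlib's RiemannInt), as a total
   function: the value of RiemannInt when f is Riemann integrable on [a,b]
   (RiemannInt is independent of the integrability proof); an unspecified
   real otherwise (never used here: all integrands are polynomials). *)
Definition Rint (f : R -> R) (a b : R) : R :=
  epsilon (inhabits 0)
    (fun l => exists pr : Riemann_integrable f a b, RiemannInt pr = l).

Fixpoint Qlist (n : nat) : list (R -> R) :=
  match n with
  | O => [fun _ => 1]
  | S k =>
      let L := Qlist k in
      L ++ [fun x => sum_f_R0 (fun m =>
              Rint (nth m L (fun _ => 0)) x 1 * nth (k - m) L (fun _ => 0) x) k]
  end.

Definition Q (n : nat) : R -> R := nth n (Qlist n) (fun _ => 0).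

Fixpoint Plist (n : nat) : list (R -> R) :=
  match n with
  | O => [fun _ => 1]
  | S k =>
      let L := Plist k in
      L ++ [fun x => sum_f_R0 (fun m =>
              (Rint (nth m L (fun _ => 0)) 0 x + Rint (Q m) x 1)
              * nth (k - m) L (fun _ => 0) x) k]
  end.

Definition P (n : nat) : R -> R := nth n (Plist n) (fun _ => 0).

Definition T (t : R) : R :=
  - / 2 * ln (t ^ 2 - t + 1)
  - sqrt 3 / 3 * (atan ((2 * t - 1) / sqrt 3) - PI / 6).

(* S = inverse of t |-> exp (T t) : [0,oo) -> (0, exp (sqrt3 pi / 9)] *)
Definition Sinv (y : R) : R :=
  epsilon (inhabits 0) (fun t => 0 <= t /\ exp (T t) = y).

(* Main.v *)
Require Import Defs.
From Stdlib Require Import Reals List ClassicalEpsilon Lra Lia Wf_nat Ranalysis5.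
From Coquelicot Require Import Coquelicot.
Import ListNotations.
Open Scope R_scope.

Lemma Qlist_len n : length (Qlist n) = S n.
Proof. induction n; simpl; auto. rewrite length_app, IHn; simpl; lia. Qed.
Lemma Plist_len n : length (Plist n) = S n.
Proof. induction n; simpl; auto. rewrite length_app, IHn; simpl; lia. Qed.

Lemma Qlist_nth n m : (m <= n)%nat -> nth m (Qlist n) (fun _ => 0) = Q m.
Proof.
  induction n; intros H.
  - replace m with 0%nat by lia. reflexivity.
  - destruct (Nat.eq_dec m (S n)). subst; reflexivity.
    simpl. rewrite app_nth1 by (rewrite Qlist_len; lia). apply IHn; lia.
Qed.
Lemma Plist_nth n m : (m <= n)%nat -> nth m (Plist n) (fun _ => 0) = P m.
Proof.
  induction n; intros H.
  - replace m with 0%nat by lia. reflexivity.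
  - destruct (Nat.eq_dec m (S n)). subst; reflexivity.
    simpl. rewrite app_nth1 by (rewrite Plist_len; lia). apply IHn; lia.
Qed.

Lemma Q0 x : Q 0 x = 1. Proof. reflexivity. Qed.
Lemma P0 x : P 0 x = 1. Proof. reflexivity. Qed.

Lemma QS n x : Q (S n) x = sum_f_R0 (fun m => Rint (Q m) x 1 * Q (n - m) x) n.
Proof.
  unfold Q at 1. simpl. rewrite app_nth2 by (rewrite Qlist_len; lia).
  rewrite Qlist_len, Nat.sub_diag. simpl.
  apply sum_eq. intros i Hi. rewrite !Qlist_nth by lia. reflexivity.
Qed.
Lemma PS n x : P (S n) x = sum_f_R0 (fun m => (Rint (P m) 0 x + Rint (Q m) x 1) * P (n - m) x) n.
Proof.
  unfold P at 1. simpl. rewrite app_nth2 by (rewrite Plist_len; lia).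
  rewrite Plist_len, Nat.sub_diag. simpl.
  apply sum_eq. intros i Hi. rewrite !Plist_nth by lia. reflexivity.
Qed.

Lemma Rint_RInt f a b : ex_RInt f a b -> Rint f a b = RInt f a b.
Proof.
  intros H. unfold Rint.
  assert (E: exists l, exists pr : Riemann_integrable f a b, RiemannInt pr = l).
  { exists (RiemannInt (ex_RInt_Reals_0 _ _ _ H)). eexists; reflexivity. }
  destruct (epsilon_spec (inhabits 0) _ E) as [pr Hpr].
  rewrite <- Hpr. symmetry. apply RInt_Reals.
Qed.

Definition Cont (f : R -> R) := forall x, continuous f x.

Lemma Cont_exRInt f a b : Cont f -> ex_RInt f a b.
Proof. intros H. apply (@ex_RInt_continuous R_CompleteNormedModule). intros; apply H. Qed.

Lemma Cont_RInt_lo f : Cont f -> Cont (fun y => RInt f y 1).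
Proof.
  intros H y. apply (@ex_derive_continuous R_AbsRing R_NormedModule). eexists.
  apply (is_derive_RInt' f (fun a0 => RInt f a0 1) y 1).
  apply filter_forall. intros. apply (@RInt_correct R_CompleteNormedModule). apply Cont_exRInt; auto.
  apply H.
Qed.

Lemma Cont_RInt_hi f : Cont f -> Cont (fun y => RInt f 0 y).
Proof.
  intros H y. apply (@ex_derive_continuous R_AbsRing R_NormedModule). eexists.
  apply (is_derive_RInt f (fun b0 => RInt f 0 b0) 0 y).
  apply filter_forall. intros. apply (@RInt_correct R_CompleteNormedModule). apply Cont_exRInt; auto.
  apply H.
Qed.

Lemma Cont_sum (f : nat -> R -> R) N : (forall m, (m <= N)%nat -> Cont (f m)) ->
  Cont (fun y => sum_f_R0 (fun m => f m y) N).
Proof.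
  induction N; intros H y; simpl.
  - apply H; lia.
  - apply (continuous_plus (fun y => sum_f_R0 (fun m => f m y) N) (f (S N))).
    apply IHN; intros; apply H; lia. apply H; lia.
Qed.

Lemma Cont_mult f g : Cont f -> Cont g -> Cont (fun y => f y * g y).
Proof. intros Hf Hg y. apply (continuous_mult f g); auto. Qed.
Lemma Cont_plus f g : Cont f -> Cont g -> Cont (fun y => f y + g y).
Proof. intros Hf Hg y. apply (continuous_plus f g); auto. Qed.
Lemma Cont_const c : Cont (fun _ => c).
Proof. intros y. apply continuous_const. Qed.
Lemma Cont_ext f g : (forall x, f x = g x) -> Cont f -> Cont g.
Proof. intros E H y. apply (continuous_ext f g); auto. Qed.

Lemma Q_cont n : Cont (Q n).
Proof.
  induction n as [n IH] using lt_wf_ind. destruct n.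
  - apply Cont_ext with (fun _ => 1). intros; reflexivity. apply Cont_const.
  - apply Cont_ext with (fun x => sum_f_R0 (fun m => RInt (Q m) x 1 * Q (n - m) x) n).
    + intros x. rewrite QS. apply sum_eq. intros i Hi. rewrite Rint_RInt; auto.
      apply Cont_exRInt, IH; lia.
    + apply Cont_sum. intros m Hm. apply Cont_mult.
      apply Cont_RInt_lo, IH; lia. apply IH; lia.
Qed.

Lemma P_cont n : Cont (P n).
Proof.
  induction n as [n IH] using lt_wf_ind. destruct n.
  - apply Cont_ext with (fun _ => 1). intros; reflexivity. apply Cont_const.
  - apply Cont_ext with (fun x => sum_f_R0 (fun m => (RInt (P m) 0 x + RInt (Q m) x 1) * P (n - m) x) n).
    + intros x. rewrite PS. apply sum_eq. intros i Hi. rewrite !Rint_RInt; auto.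
      apply Cont_exRInt, Q_cont. apply Cont_exRInt, IH; lia.
    + apply Cont_sum. intros m Hm. apply Cont_mult. apply Cont_plus.
      apply Cont_RInt_hi, IH; lia. apply Cont_RInt_lo, Q_cont. apply IH; lia.
Qed.

Lemma QS' n x : Q (S n) x = sum_f_R0 (fun m => RInt (Q m) x 1 * Q (n - m) x) n.
Proof. rewrite QS. apply sum_eq; intros. rewrite Rint_RInt; auto. apply Cont_exRInt, Q_cont. Qed.
Lemma PS' n x : P (S n) x = sum_f_R0 (fun m => (RInt (P m) 0 x + RInt (Q m) x 1) * P (n - m) x) n.
Proof. rewrite PS. apply sum_eq; intros. rewrite !Rint_RInt; auto.
  apply Cont_exRInt, Q_cont. apply Cont_exRInt, P_cont. Qed.

Lemma RInt_nonneg f a b : Cont f -> a <= b -> (forall t, a <= t <= b -> 0 <= f t) -> 0 <= RInt f a b.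
Proof. intros Hc Hab H. apply RInt_ge_0; auto. apply Cont_exRInt; auto. intros; apply H; lra. Qed.

Lemma sum_nonneg (f : nat -> R) N : (forall i, (i <= N)%nat -> 0 <= f i) -> 0 <= sum_f_R0 f N.
Proof.
  induction N; intros H; simpl. apply H; lia.
  apply Rplus_le_le_0_compat. apply IHN; intros; apply H; lia. apply H; lia.
Qed.

Lemma Q_nonneg n x : 0 <= x <= 1 -> 0 <= Q n x.
Proof.
  revert x. induction n as [n IH] using lt_wf_ind. destruct n; intros x Hx.
  - rewrite Q0; lra.
  - rewrite QS'. apply sum_nonneg. intros m Hm.
    apply Rmult_le_pos. apply RInt_nonneg. apply Q_cont. lra.
    intros; apply IH; [lia|lra]. apply IH; [lia|lra].
Qed.

Lemma P_nonneg n x : 0 <= x <= 1 -> 0 <= P n x.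
Proof.
  revert x. induction n as [n IH] using lt_wf_ind. destruct n; intros x Hx.
  - rewrite P0; lra.
  - rewrite PS'. apply sum_nonneg. intros m Hm.
    apply Rmult_le_pos. apply Rplus_le_le_0_compat.
    apply RInt_nonneg. apply P_cont. lra. intros; apply IH; [lia|lra].
    apply RInt_nonneg. apply Q_cont. lra. intros; apply Q_nonneg; lra.
    apply IH; [lia|lra].
Qed.

Lemma quad_pos t : 0 < t ^ 2 - t + 1.
Proof. nra. Qed.

Lemma sqrt3_pos : 0 < sqrt 3.
Proof. apply sqrt_lt_R0; lra. Qed.

Lemma T_deriv t : is_derive T t (- t / (t ^ 2 - t + 1)).
Proof.
  unfold T. auto_derive.
  - apply quad_pos.
  - assert (Hs : sqrt 3 * sqrt 3 = 3) by (apply sqrt_sqrt; lra).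
    pose proof sqrt3_pos. pose proof (quad_pos t).
    assert (Hs2 : sqrt 3 ^ 2 = 3) by (simpl; lra).
    field_simplify; [rewrite Hs2; field; split; [lra|] | lra | repeat split; nra].
    intro E. assert (E2: 24 * (t ^ 2 - t + 1)^2 = 0) by (rewrite <- E; ring). nra.
Qed.

Lemma T_dpl t : derivable_pt_lim T t (- t / (t ^ 2 - t + 1)).
Proof. apply is_derive_Reals, T_deriv. Qed.

Lemma T_cont t : continuous T t.
Proof. apply (@ex_derive_continuous R_AbsRing R_NormedModule). eexists; apply T_deriv. Qed.

Lemma T_nonincr s t : s <= t -> 0 <= s -> T t <= T s.
Proof.
  intros H Hs. destruct (Req_dec s t). subst; lra.
  destruct (MVT_cor2 T (fun t => - t / (t ^ 2 - t + 1)) s t) as [c [E Hc]]; [lra| |].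
  intros; apply T_dpl.
  assert (0 <= c / (c ^ 2 - c + 1)) by (apply Rdiv_le_0_compat; [lra| apply quad_pos]).
  assert (- c / (c ^ 2 - c + 1) = - (c / (c ^ 2 - c + 1))) by (unfold Rdiv; ring).
  nra.
Qed.

Lemma T_decr s t : s < t -> 0 <= s -> T t < T s.
Proof.
  intros H Hs. set (m := (s + t) / 2).
  destruct (MVT_cor2 T (fun t => - t / (t ^ 2 - t + 1)) m t) as [c [E Hc]]; [unfold m; lra| |].
  intros; apply T_dpl.
  assert (0 < c / (c ^ 2 - c + 1)) by (apply Rdiv_lt_0_compat; [unfold m in Hc; lra| apply quad_pos]).
  assert (- c / (c ^ 2 - c + 1) = - (c / (c ^ 2 - c + 1))) by (unfold Rdiv; ring).
  pose proof (T_nonincr s m). unfold m in *. nra.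
Qed.

Lemma atan_isqrt3 : atan (1 / sqrt 3) = PI / 6.
Proof.
  rewrite <- tan_PI6. apply atan_tan. pose proof PI_RGT_0. lra.
Qed.

Lemma T1 : T 1 = 0.
Proof.
  unfold T. replace (1 ^ 2 - 1 + 1) with 1 by ring. rewrite ln_1.
  replace ((2 * 1 - 1) / sqrt 3) with (1 / sqrt 3) by (field; apply Rgt_not_eq, sqrt3_pos).
  rewrite atan_isqrt3. ring.
Qed.

Lemma T0 : T 0 = sqrt 3 * PI / 9.
Proof.
  unfold T. replace (0 ^ 2 - 0 + 1) with 1 by ring. rewrite ln_1.
  replace ((2 * 0 - 1) / sqrt 3) with (- (1 / sqrt 3)) by (field; apply Rgt_not_eq, sqrt3_pos).
  rewrite atan_opp, atan_isqrt3. field.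
Qed.

Lemma T0_big : 1 / 2 <= T 0.
Proof.
  rewrite T0. pose proof PI2_3_2.
  assert (17/10 <= sqrt 3).
  { apply Rsqr_incr_0_var. unfold Rsqr. rewrite sqrt_sqrt; lra. apply Rlt_le, sqrt3_pos. }
  nra.
Qed.

Definition h t := exp (T t).

Lemma h_cont t : continuous h t.
Proof. apply continuous_exp_comp, T_cont. Qed.

Lemma h_decr s t : s < t -> 0 <= s -> h t < h s.
Proof. intros; unfold h; apply exp_increasing, T_decr; auto. Qed.

Lemma h1 : h 1 = 1.
Proof. unfold h; rewrite T1; apply exp_0. Qed.

Lemma h0_big : 2 <= h 0 * h 0.
Proof.
  unfold h. rewrite <- exp_plus. pose proof T0_big.
  pose proof (exp_ineq1 (T 0 + T 0)). lra.
Qed.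

Lemma h2_lt1 : h 2 < 1.
Proof. rewrite <- h1. apply h_decr; lra. Qed.

Lemma h_pos t : 0 < h t.
Proof. apply exp_pos. Qed.

Lemma h_inj s t : 0 <= s -> 0 <= t -> h s = h t -> s = t.
Proof.
  intros Hs Ht E. destruct (Rtotal_order s t) as [L|[L|L]]; auto.
  apply h_decr in L; auto; lra. apply h_decr in L; auto; lra.
Qed.

Lemma Sinv_spec y : h 2 < y < h 0 -> 0 < Sinv y < 2 /\ h (Sinv y) = y.
Proof.
  intros Hy.
  destruct (IVT_gen_consistent h 0 2 y h_cont) as [t [Ht Et]].
  { rewrite Rmin_right, Rmax_left; try lra; apply Rlt_le, h_decr; lra. }
  rewrite Rmin_left, Rmax_right in Ht by lra.
  assert (E : exists t, 0 <= t /\ exp (T t) = y) by (exists t; split; [lra|exact Et]).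
  destruct (epsilon_spec (inhabits 0) _ E) as [H1 H2]. fold (Sinv y) in H1, H2.
  fold (h (Sinv y)) in H2.
  assert (Sinv y = t) by (apply h_inj; auto; lra).
  rewrite H. split; auto. split.
  destruct (Req_dec t 0); [subst; lra | lra].
  destruct (Req_dec t 2); [subst; lra | lra].
Qed.

Lemma Sinv_h t : 0 <= t -> Sinv (h t) = t.
Proof.
  intros Ht.
  assert (E : exists s, 0 <= s /\ exp (T s) = h t) by (exists t; split; [lra|reflexivity]).
  destruct (epsilon_spec (inhabits 0) _ E) as [H1 H2]. fold (Sinv (h t)) in H1, H2.
  apply h_inj; auto.
Qed.

Lemma Sinv_1 : Sinv 1 = 1.
Proof. rewrite <- h1 at 1. apply Sinv_h; lra. Qed.

Lemma Sinv_decr y1 y2 : h 2 < y1 < h 0 -> h 2 < y2 < h 0 -> y1 <= y2 -> Sinv y2 <= Sinv y1.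
Proof.
  intros H1 H2 L. destruct (Sinv_spec _ H1) as [A1 B1]. destruct (Sinv_spec _ H2) as [A2 B2].
  destruct (Rle_dec (Sinv y2) (Sinv y1)); auto.
  assert (Sinv y1 < Sinv y2) by lra. apply h_decr in H; lra.
Qed.

Lemma Sinv_spec' y : h 2 <= y <= h 0 -> 0 <= Sinv y <= 2 /\ h (Sinv y) = y.
Proof.
  intros Hy. destruct (Req_dec y (h 2)). subst. rewrite Sinv_h by lra. split; [lra|auto].
  destruct (Req_dec y (h 0)). subst. rewrite Sinv_h by lra. split; [lra|auto].
  destruct (Sinv_spec y) as [A B]; [lra|]. split; [lra|auto].
Qed.

Lemma mh_dpl t : derivable_pt_lim (fun t => - h t) t (h t * (t / (t ^ 2 - t + 1))).
Proof.
  apply is_derive_Reals. unfold h.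
  evar (d : R). replace (exp (T t) * (t / (t ^ 2 - t + 1))) with d.
  apply (is_derive_opp (fun t => exp (T t))).
  apply (is_derive_comp exp T). apply is_derive_exp. apply T_deriv.
  unfold d. simpl. unfold scal; simpl; unfold mult; simpl. unfold opp; simpl. unfold Rdiv. ring.
Qed.

Lemma is_derive_val (f : R -> R) x l l' : is_derive f x l -> l = l' -> is_derive f x l'.
Proof. intros H E; subst; auto. Qed.

Definition mh_der (a : R) : derivable_pt (fun t => - h t) a :=
  exist _ _ (mh_dpl a).

Lemma Sinv_deriv y : h 2 < y < h 0 ->
  is_derive Sinv y (- ((Sinv y) ^ 2 - Sinv y + 1) / (y * Sinv y)).
Proof.
  intros Hy.
  set (f := fun t => - h t). set (g := fun y => Sinv (- y)).
  assert (h20 : h 2 < h 0) by (apply h_decr; lra).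
  assert (Hcomp : forall x, - h 0 <= x <= - h 2 -> comp f g x = id x).
  { intros x Hx. unfold comp, f, g, id. destruct (Sinv_spec' (-x)) as [_ E]; [lra|]. rewrite E; ring. }
  assert (Hcont : continuity_pt g (- y)).
  { apply (continuity_pt_recip_interv f g 0 2); [lra| | | | | ].
    - intros a b Ha Hab Hb. unfold f. apply Ropp_lt_contravar, h_decr; lra.
    - intros a Ha Hb. apply Hcomp. unfold f in *; lra.
    - intros a Ha Hb. unfold g. unfold f in *. destruct (Sinv_spec' (-a)); [lra|]. lra.
    - intros a _. apply continuity_pt_filterlim. unfold f.
      apply (continuous_opp h). apply h_cont.
    - unfold f; lra. }
  assert (Hg0 : g (- h 0) = 0) by (unfold g; rewrite Ropp_involutive; apply Sinv_h; lra).
  assert (Hg2 : g (- h 2) = 2) by (unfold g; rewrite Ropp_involutive; apply Sinv_h; lra).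
  destruct (Sinv_spec y Hy) as [Hs Hhs].
  assert (Hgx : g (- h 0) <= g (- y) <= g (- h 2)).
  { rewrite Hg0, Hg2. unfold g. rewrite Ropp_involutive. lra. }
  pose proof (derivable_pt_lim_recip_interv f g (- h 0) (- h 2) (- y) (fun a _ => mh_der a) Hcont
     ltac:(lra) ltac:(lra) Hgx Hcomp) as D.
  simpl in D. unfold g in D. rewrite Ropp_involutive in D.
  assert (Hpos : 0 < h (Sinv y) * (Sinv y / (Sinv y ^ 2 - Sinv y + 1))).
  { apply Rmult_lt_0_compat. apply h_pos. apply Rdiv_lt_0_compat. lra. apply quad_pos. }
  specialize (D (Rgt_not_eq _ _ Hpos)).
  apply is_derive_Reals in D.
  apply (is_derive_ext (fun y0 => g (- y0))). intros; unfold g; rewrite Ropp_involutive; auto.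
  assert (Hn : is_derive (fun x:R => - x) y (-1)) by (auto_derive; [auto| ring]).
  pose proof (is_derive_comp g Ropp y _ _ D Hn) as D2.
  eapply is_derive_val. exact D2.
  simpl. unfold scal; simpl; unfold mult; simpl. rewrite Hhs.
  pose proof (quad_pos (Sinv y)). pose proof (h_pos 2). field. repeat split; try lra.
Qed.

Definition aa z x := 2 * z * x + 1 - 2 * z.
Definition rr z x := sqrt (aa z x / (1 - 2 * z)).
Definition F z x := / (sqrt (aa z x) * Sinv (rr z x)).
Definition qf z x := / sqrt (aa z x).
Definition uf z x := (1 - sqrt (aa z x)) / z.
Definition psi z x := sqrt (aa z x) * (1 - Sinv (rr z x)) / z.

Section Z.
Variable z : R.
Hypothesis Hz : 0 < z < / 4.

Lemma aa_bnd x : 0 <= x <= 1 -> 1 - 2 * z <= aa z x <= 1.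
Proof. intros; unfold aa; nra. Qed.

Lemma aa_pos x : 0 <= x <= 1 -> 0 < aa z x.
Proof. intros H; pose proof (aa_bnd x H); lra. Qed.

Lemma rr_bnd x : 0 <= x <= 1 -> 1 <= rr z x /\ rr z x * rr z x <= / (1 - 2 * z) /\ rr z x * rr z x = aa z x / (1 - 2 * z).
Proof.
  intros H. pose proof (aa_bnd x H). unfold rr.
  assert (0 <= aa z x / (1 - 2 * z)) by (apply Rdiv_le_0_compat; lra).
  rewrite sqrt_sqrt by auto. split; [|split].
  - apply Rle_trans with (sqrt 1); [rewrite sqrt_1; lra|]. apply sqrt_le_1_alt.
    apply (Rmult_le_reg_r (1 - 2*z)); [lra|].
    replace (aa z x / (1 - 2 * z) * (1 - 2 * z)) with (aa z x) by (field; lra). lra.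
  - unfold Rdiv. rewrite <- (Rmult_1_l (/ (1 - 2*z))) at 2. apply Rmult_le_compat_r.
    apply Rlt_le, Rinv_0_lt_compat; lra. lra.
  - auto.
Qed.

Lemma rr_range x : 0 <= x <= 1 -> h 2 < rr z x < h 0.
Proof.
  intros H. destruct (rr_bnd x H) as [A [B _]]. pose proof h2_lt1. split. lra.
  pose proof h0_big. pose proof (h_pos 0).
  assert (/ (1 - 2 * z) < 2).
  { rewrite <- (Rinv_inv 2). apply Rinv_lt_contravar; lra. }
  nra.
Qed.

Lemma S_bnd x : 0 <= x <= 1 -> 0 < Sinv (rr z x) <= 1.
Proof.
  intros H. pose proof (rr_range x H). destruct (Sinv_spec _ H0) as [A _]. split. lra.
  rewrite <- Sinv_1. apply Sinv_decr; try lra. pose proof h2_lt1. pose proof h0_big. pose proof (h_pos 0). nra.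
  apply (rr_bnd x H).
Qed.


Lemma psi_deriv x : 0 <= x <= 1 -> is_derive (psi z) x (F z x).
Proof.
  intros H. pose proof (aa_pos x H) as Ha. pose proof (rr_range x H) as Hr.
  pose proof (Sinv_deriv _ Hr) as DS.
  pose proof (S_bnd x H) as HS. destruct (rr_bnd x H) as [R1 [R2 R3]].
  unfold psi, F, rr in *. unfold aa in *.
  auto_derive.
  - unfold Rminus, Rdiv in *. repeat split; try lra.
    eexists; exact DS.
    apply Rmult_lt_0_compat; [lra|apply Rinv_0_lt_compat; lra].
  - unfold Rminus, Rdiv in *. change (fun x0 : R => Sinv x0) with Sinv. rewrite (is_derive_unique _ _ _ DS).
    set (s := sqrt (2 * z * x + 1 + - (2 * z))) in *.
    set (r := sqrt ((2 * z * x + 1 + - (2 * z)) * / (1 + - (2 * z)))) in *.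
    set (S := Sinv r) in *.
    assert (Hs : 0 < s) by (apply sqrt_lt_R0; lra).
    assert (E : 1 + - (2 * z) = s * s * / (r * r)).
    { rewrite R3. unfold s. rewrite sqrt_sqrt by lra. field. split; lra. }
    rewrite E. field. repeat split; lra.
Qed.

Lemma uf_deriv x : 0 <= x <= 1 -> is_derive (fun t => - uf z t) x (qf z x).
Proof.
  intros H. pose proof (aa_pos x H) as Ha. unfold uf, qf, aa in *.
  auto_derive. lra. assert (0 < sqrt (2 * z * x + 1 - 2 * z)) by (apply sqrt_lt_R0; lra).
  unfold Rminus in *. field. lra.
Qed.

Lemma F_cont x : 0 <= x <= 1 -> continuous (F z) x.
Proof.
  intros H. apply (@ex_derive_continuous R_AbsRing R_NormedModule).
  pose proof (aa_pos x H) as Ha. pose proof (rr_range x H) as Hr.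
  pose proof (Sinv_deriv _ Hr) as DS.
  pose proof (S_bnd x H) as HS. destruct (rr_bnd x H) as [R1 [R2 R3]].
  unfold F, rr in *. unfold aa in *.
  auto_derive. unfold Rminus, Rdiv in *.
  assert (0 < sqrt (2 * z * x + 1 + - (2 * z))) by (apply sqrt_lt_R0; lra).
  repeat split; try lra;
  first [ apply Rmult_lt_0_compat; [lra|apply Rinv_0_lt_compat; lra]
        | eexists; exact DS
        | apply Rgt_not_eq, Rmult_lt_0_compat; lra ].
Qed.

Lemma qf_cont x : 0 <= x <= 1 -> continuous (qf z) x.
Proof.
  intros H. apply (@ex_derive_continuous R_AbsRing R_NormedModule).
  pose proof (aa_pos x H) as Ha. unfold qf, aa in *.
  auto_derive. split. lra. assert (0 < sqrt (2 * z * x + 1 - 2 * z)) by (apply sqrt_lt_R0; lra).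
  unfold Rminus in *; lra.
Qed.

Lemma psi_0 : psi z 0 = 0.
Proof.
  unfold psi, rr, aa. replace (2 * z * 0 + 1 - 2 * z) with (1 - 2 * z) by ring.
  replace ((1 - 2 * z) / (1 - 2 * z)) with 1 by (field; lra). rewrite sqrt_1, Sinv_1.
  unfold Rdiv; ring.
Qed.

Lemma uf_1 : uf z 1 = 0.
Proof. unfold uf, aa. replace (2 * z * 1 + 1 - 2 * z) with 1 by ring. rewrite sqrt_1. unfold Rdiv; ring. Qed.

Lemma RInt_F x : 0 <= x <= 1 -> is_RInt (F z) 0 x (psi z x).
Proof.
  intros H. replace (psi z x) with (minus (psi z x) (psi z 0)).
  apply (@is_RInt_derive R_CompleteNormedModule).
  intros t Ht. rewrite Rmin_left, Rmax_right in Ht by lra. apply psi_deriv; lra.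
  intros t Ht. rewrite Rmin_left, Rmax_right in Ht by lra. apply F_cont; lra.
  rewrite psi_0. unfold minus, plus, opp; simpl. ring.
Qed.

Lemma RInt_q x : 0 <= x <= 1 -> is_RInt (qf z) x 1 (uf z x).
Proof.
  intros H. replace (uf z x) with (minus (- uf z 1) (- uf z x)).
  apply (@is_RInt_derive R_CompleteNormedModule (fun t => - uf z t)).
  intros t Ht. rewrite Rmin_left, Rmax_right in Ht by lra. apply uf_deriv; lra.
  intros t Ht. rewrite Rmin_left, Rmax_right in Ht by lra. apply qf_cont; lra.
  rewrite uf_1. unfold minus, plus, opp; simpl. ring.
Qed.

Lemma q_eq x : 0 <= x <= 1 -> qf z x = 1 + z * uf z x * qf z x.
Proof.
  intros H. pose proof (aa_pos x H). unfold qf, uf.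
  assert (0 < sqrt (aa z x)) by (apply sqrt_lt_R0; lra). field. lra.
Qed.

Lemma F_eq x : 0 <= x <= 1 -> F z x = 1 + z * (psi z x + uf z x) * F z x.
Proof.
  intros H. pose proof (aa_pos x H). pose proof (S_bnd x H). unfold F, psi, uf.
  assert (0 < sqrt (aa z x)) by (apply sqrt_lt_R0; lra). field. lra.
Qed.

Definition KF := / (sqrt (1 - 2 * z) * Sinv (rr z 1)).
Definition KQ := / sqrt (1 - 2 * z).

Lemma q_bnd x : 0 <= x <= 1 -> 1 <= qf z x <= KQ.
Proof.
  intros H. pose proof (aa_bnd x H). unfold qf, KQ.
  assert (0 < sqrt (1 - 2 * z)) by (apply sqrt_lt_R0; lra).
  assert (sqrt (1 - 2*z) <= sqrt (aa z x)) by (apply sqrt_le_1_alt; lra).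
  assert (sqrt (aa z x) <= 1) by (rewrite <- sqrt_1; apply sqrt_le_1_alt; lra).
  split. rewrite <- Rinv_1. apply Rinv_le_contravar; lra.
  apply Rinv_le_contravar; lra.
Qed.

Lemma F_bnd x : 0 <= x <= 1 -> 1 <= F z x <= KF.
Proof.
  intros H. pose proof (aa_bnd x H). unfold F, KF.
  assert (0 < sqrt (1 - 2 * z)) by (apply sqrt_lt_R0; lra).
  assert (sqrt (1 - 2*z) <= sqrt (aa z x)) by (apply sqrt_le_1_alt; lra).
  assert (sqrt (aa z x) <= 1) by (rewrite <- sqrt_1; apply sqrt_le_1_alt; lra).
  pose proof (S_bnd x H). pose proof (S_bnd 1 ltac:(lra)).
  assert (Sinv (rr z 1) <= Sinv (rr z x)).
  { apply Sinv_decr. apply rr_range; lra. apply rr_range; lra.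
    unfold rr. apply sqrt_le_1_alt. unfold Rdiv. apply Rmult_le_compat_r.
    apply Rlt_le, Rinv_0_lt_compat; lra. unfold aa; nra. }
  split. rewrite <- Rinv_1. apply Rinv_le_contravar. apply Rmult_lt_0_compat; lra.
  rewrite <- (Rmult_1_l 1). apply Rmult_le_compat; lra.
  apply Rinv_le_contravar. apply Rmult_lt_0_compat; lra.
  apply Rmult_le_compat; lra.
Qed.

End Z.

Lemma sum_swap (c : nat -> nat -> R) N :
  sum_f_R0 (fun n => sum_f_R0 (fun m => c m (n - m)%nat) n) N =
  sum_f_R0 (fun m => sum_f_R0 (fun k => c m k) (N - m)) N.
Proof.
  induction N.
  - simpl. reflexivity.
  - rewrite tech5, IHN. rewrite tech5. rewrite (tech5 (fun m => sum_f_R0 (fun k => c m k) (S N - m))).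
    rewrite Nat.sub_diag. simpl sum_f_R0 at 4. 
    rewrite (sum_eq (fun m => sum_f_R0 (fun k => c m k) (S N - m)) (fun m => sum_f_R0 (fun k => c m k) (N - m) + c m (S N - m)%nat)).
    rewrite sum_plus. assert (E0: sum_f_R0 (fun k => c (S N) k) 0 = c (S N) 0%nat) by reflexivity. rewrite E0. ring.
    intros i Hi. replace (S N - i)%nat with (S (N - i)) by lia. rewrite tech5. reflexivity.
Qed.

Lemma sum_nonneg' (f : nat -> R) N : (forall i, (i <= N)%nat -> 0 <= f i) -> 0 <= sum_f_R0 f N.
Proof.
  induction N; intros H; simpl. apply H; lia.
  apply Rplus_le_le_0_compat. apply IHN; intros; apply H; lia. apply H; lia.
Qed.

Lemma sum_mono_N (f : nat -> R) N M : (N <= M)%nat -> (forall i, 0 <= f i) -> sum_f_R0 f N <= sum_f_R0 f M.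
Proof.
  intros H Hf. induction H. lra. rewrite tech5. specialize (Hf (S m)). lra.
Qed.

Lemma term_le_sum (f : nat -> R) n : (forall i, 0 <= f i) -> f n <= sum_f_R0 f n.
Proof.
  intros Hf. destruct n. simpl; lra. rewrite tech5.
  pose proof (sum_nonneg' f n (fun i _ => Hf i)). lra.
Qed.

Lemma sum_le_f (f g : nat -> R) N : (forall i, (i <= N)%nat -> f i <= g i) -> sum_f_R0 f N <= sum_f_R0 g N.
Proof. apply sum_Rle. Qed.

Lemma conv_upper (a B : nat -> R) N :
  (forall i, 0 <= a i) -> (forall i j, (i <= j)%nat -> B i <= B j) ->
  sum_f_R0 (fun m => a m * B (N - m)%nat) N <= sum_f_R0 a N * B N.
Proof.
  intros Ha HB. rewrite Rmult_comm, scal_sum. apply sum_Rle. intros i Hi.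
  apply Rmult_le_compat_l. apply Ha. apply HB. lia.
Qed.

Lemma conv_lower (a B : nat -> R) N M :
  (2 * M <= N)%nat -> (forall i, 0 <= a i) -> (forall i, 0 <= B i) -> (forall i j, (i <= j)%nat -> B i <= B j) ->
  sum_f_R0 a M * B M <= sum_f_R0 (fun m => a m * B (N - m)%nat) N.
Proof.
  intros HM Ha HB0 HB. rewrite Rmult_comm, scal_sum.
  apply Rle_trans with (sum_f_R0 (fun m => a m * B (N - m)%nat) M).
  apply sum_Rle. intros i Hi. apply Rmult_le_compat_l. apply Ha. apply HB. lia.
  apply sum_mono_N. lia. intros; apply Rmult_le_pos; auto.
Qed.

Definition sQ z N x := sum_f_R0 (fun n => Q n x * z ^ n) N.
Definition sP z N x := sum_f_R0 (fun n => P n x * z ^ n) N.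

Lemma sum_scal_l (f : nat -> R) k N : sum_f_R0 (fun i => k * f i) N = k * sum_f_R0 f N.
Proof. induction N; simpl. ring. rewrite IHN; ring. Qed.
Lemma sum_scal_r (f : nat -> R) k N : sum_f_R0 (fun i => f i * k) N = sum_f_R0 f N * k.
Proof. induction N; simpl. ring. rewrite IHN; ring. Qed.

Lemma pow_split z i m : (m <= i)%nat -> z ^ S i = z * (z ^ m * z ^ (i - m)).
Proof. intros H. rewrite <- pow_add. replace (m + (i - m))%nat with i by lia. simpl; ring. Qed.

Lemma sQ_S z N x : sQ z (S N) x = 1 + z * sum_f_R0 (fun m => (RInt (Q m) x 1 * z ^ m) * sQ z (N - m) x) N.
Proof.
  unfold sQ. rewrite decomp_sum by lia. simpl pred. rewrite Q0. simpl pow. rewrite Rmult_1_l.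
  f_equal.
  rewrite (sum_eq _ (fun i => z * sum_f_R0 (fun m => (RInt (Q m) x 1 * z ^ m) * (Q (i - m)%nat x * z ^ (i - m))) i)).
  rewrite sum_scal_l. f_equal.
  pose proof (sum_swap (fun m k => (RInt (Q m) x 1 * z ^ m) * (Q k x * z ^ k)) N) as SW. cbv beta in SW.
  rewrite SW. apply sum_eq. intros m Hm.
  rewrite <- sum_scal_l. reflexivity.
  intros i Hi. rewrite QS', <- sum_scal_r, <- sum_scal_l. apply sum_eq. intros m Hm.
  change (z * z ^ i) with (z ^ S i). rewrite (pow_split z i m) by lia. ring.
Qed.

Lemma sP_S z N x : sP z (S N) x = 1 + z * sum_f_R0 (fun m => ((RInt (P m) 0 x + RInt (Q m) x 1) * z ^ m) * sP z (N - m) x) N.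
Proof.
  unfold sP. rewrite decomp_sum by lia. simpl pred. rewrite P0. simpl pow. rewrite Rmult_1_l.
  f_equal.
  rewrite (sum_eq _ (fun i => z * sum_f_R0 (fun m => ((RInt (P m) 0 x + RInt (Q m) x 1) * z ^ m) * (P (i - m)%nat x * z ^ (i - m))) i)).
  rewrite sum_scal_l. f_equal.
  pose proof (sum_swap (fun m k => ((RInt (P m) 0 x + RInt (Q m) x 1) * z ^ m) * (P k x * z ^ k)) N) as SW. cbv beta in SW.
  rewrite SW. apply sum_eq. intros m Hm.
  rewrite <- sum_scal_l. reflexivity.
  intros i Hi. rewrite PS', <- sum_scal_r, <- sum_scal_l. apply sum_eq. intros m Hm.
  change (z * z ^ i) with (z ^ S i). rewrite (pow_split z i m) by lia. ring.
Qed.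

Lemma RInt_sum (f : nat -> R -> R) (c : nat -> R) a b N : (forall n, Cont (f n)) ->
  RInt (fun t => sum_f_R0 (fun n => f n t * c n) N) a b = sum_f_R0 (fun n => RInt (f n) a b * c n) N.
Proof.
  intros Hf. induction N; simpl.
  - rewrite (RInt_ext _ (fun t => scal (c 0%nat) (f 0%nat t))).
    rewrite (@RInt_scal R_CompleteNormedModule). unfold scal; simpl; unfold mult; simpl; ring.
    apply Cont_exRInt, Hf. intros; unfold scal; simpl; unfold mult; simpl; ring.
  - rewrite (RInt_ext _ (fun t => plus (sum_f_R0 (fun n => f n t * c n) N) (scal (c (S N)) (f (S N) t)))).
    rewrite (@RInt_plus R_CompleteNormedModule), (@RInt_scal R_CompleteNormedModule), IHN. unfold plus, scal; simpl; unfold mult; simpl; ring.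
    apply Cont_exRInt, Hf.
    apply Cont_exRInt, Cont_sum. intros; apply Cont_mult. apply Hf. apply Cont_const.
    apply (@ex_RInt_scal R_CompleteNormedModule). apply Cont_exRInt, Hf.
    intros; unfold plus, scal; simpl; unfold mult; simpl; ring.
Qed.

Lemma sQ_cont z N : Cont (sQ z N).
Proof. unfold sQ. apply Cont_sum. intros. apply Cont_mult. apply Q_cont. apply Cont_const. Qed.
Lemma sP_cont z N : Cont (sP z N).
Proof. unfold sP. apply Cont_sum. intros. apply Cont_mult. apply P_cont. apply Cont_const. Qed.

Lemma RInt_sQ z N x y : RInt (sQ z N) x y = sum_f_R0 (fun m => RInt (Q m) x y * z ^ m) N.
Proof. unfold sQ. apply RInt_sum. intros; apply Q_cont. Qed.
Lemma RInt_sP z N x y : RInt (sP z N) x y = sum_f_R0 (fun m => RInt (P m) x y * z ^ m) N.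
Proof. unfold sP. apply RInt_sum. intros; apply P_cont. Qed.

Lemma Qterm_nonneg z n x : 0 <= z -> 0 <= x <= 1 -> 0 <= Q n x * z ^ n.
Proof. intros. apply Rmult_le_pos. apply Q_nonneg; auto. apply pow_le; auto. Qed.
Lemma Pterm_nonneg z n x : 0 <= z -> 0 <= x <= 1 -> 0 <= P n x * z ^ n.
Proof. intros. apply Rmult_le_pos. apply P_nonneg; auto. apply pow_le; auto. Qed.

Lemma sQ_mono z x i j : 0 <= z -> 0 <= x <= 1 -> (i <= j)%nat -> sQ z i x <= sQ z j x.
Proof. intros. unfold sQ. apply sum_mono_N; auto. intros; apply Qterm_nonneg; auto. Qed.
Lemma sP_mono z x i j : 0 <= z -> 0 <= x <= 1 -> (i <= j)%nat -> sP z i x <= sP z j x.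
Proof. intros. unfold sP. apply sum_mono_N; auto. intros; apply Pterm_nonneg; auto. Qed.
Lemma sQ_nonneg z N x : 0 <= z -> 0 <= x <= 1 -> 0 <= sQ z N x.
Proof. intros. unfold sQ. apply sum_nonneg'. intros; apply Qterm_nonneg; auto. Qed.
Lemma sP_nonneg z N x : 0 <= z -> 0 <= x <= 1 -> 0 <= sP z N x.
Proof. intros. unfold sP. apply sum_nonneg'. intros; apply Pterm_nonneg; auto. Qed.

Lemma aQ_nonneg z m x : 0 <= z -> 0 <= x <= 1 -> 0 <= RInt (Q m) x 1 * z ^ m.
Proof. intros. apply Rmult_le_pos. apply RInt_nonneg. apply Q_cont. lra. intros; apply Q_nonneg; lra. apply pow_le; auto. Qed.
Lemma aP_nonneg z m x : 0 <= z -> 0 <= x <= 1 -> 0 <= (RInt (P m) 0 x + RInt (Q m) x 1) * z ^ m.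
Proof. intros. apply Rmult_le_pos. apply Rplus_le_le_0_compat.
  apply RInt_nonneg. apply P_cont. lra. intros; apply P_nonneg; lra.
  apply RInt_nonneg. apply Q_cont. lra. intros; apply Q_nonneg; lra. apply pow_le; auto. Qed.

Lemma sumA z N x : sum_f_R0 (fun m => (RInt (P m) 0 x + RInt (Q m) x 1) * z ^ m) N
  = RInt (sP z N) 0 x + RInt (sQ z N) x 1.
Proof. rewrite RInt_sP, RInt_sQ, <- sum_plus. apply sum_eq; intros; ring. Qed.

Lemma ex_RInt_qf z x : 0 < z < / 4 -> 0 <= x <= 1 -> ex_RInt (qf z) x 1 /\ RInt (qf z) x 1 = uf z x.
Proof. intros. pose proof (RInt_q z H x H0). split. eexists; eauto. apply is_RInt_unique; auto. Qed.
Lemma ex_RInt_F z x : 0 < z < / 4 -> 0 <= x <= 1 -> ex_RInt (F z) 0 x /\ RInt (F z) 0 x = psi z x.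
Proof. intros. pose proof (RInt_F z H x H0). split. eexists; eauto. apply is_RInt_unique; auto. Qed.

Lemma bounds z : 0 < z < / 4 -> forall N x, 0 <= x <= 1 -> sQ z N x <= qf z x /\ sP z N x <= F z x.
Proof.
  intros Hz. induction N; intros x Hx.
  - unfold sQ, sP; simpl. rewrite Q0, P0. pose proof (q_bnd z Hz x Hx). pose proof (F_bnd z Hz x Hx). lra.
  - pose proof (q_bnd z Hz x Hx). pose proof (F_bnd z Hz x Hx).
    destruct (ex_RInt_qf z x Hz Hx) as [Eq Vq]. destruct (ex_RInt_F z x Hz Hx) as [EF VF].
    assert (IQ : RInt (sQ z N) x 1 <= uf z x).
    { rewrite <- Vq. apply RInt_le; auto. lra. apply Cont_exRInt, sQ_cont.
      intros t Ht. apply IHN; lra. }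
    assert (IP : RInt (sP z N) 0 x <= psi z x).
    { rewrite <- VF. apply RInt_le; auto. lra. apply Cont_exRInt, sP_cont.
      intros t Ht. apply IHN; lra. }
    assert (IQ0 : 0 <= RInt (sQ z N) x 1).
    { apply RInt_nonneg. apply sQ_cont. lra. intros; apply sQ_nonneg; lra. }
    assert (IP0 : 0 <= RInt (sP z N) 0 x).
    { apply RInt_nonneg. apply sP_cont. lra. intros; apply sP_nonneg; lra. }
    destruct (IHN x Hx) as [HQ HP].
    pose proof (sQ_nonneg z N x ltac:(lra) Hx). pose proof (sP_nonneg z N x ltac:(lra) Hx).
    split.
    + rewrite sQ_S.
      pose proof (conv_upper (fun m => RInt (Q m) x 1 * z ^ m) (fun k => sQ z k x) N
        (fun i => aQ_nonneg z i x ltac:(lra) Hx) (fun i j H => sQ_mono z x i j ltac:(lra) Hx H)) as CU.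
      cbv beta in CU. rewrite <- RInt_sQ in CU.
      rewrite (q_eq z Hz x Hx). 
      assert (RInt (sQ z N) x 1 * sQ z N x <= uf z x * qf z x) by nra. nra.
    + rewrite sP_S.
      pose proof (conv_upper (fun m => (RInt (P m) 0 x + RInt (Q m) x 1) * z ^ m) (fun k => sP z k x) N
        (fun i => aP_nonneg z i x ltac:(lra) Hx) (fun i j H => sP_mono z x i j ltac:(lra) Hx H)) as CU.
      cbv beta in CU. rewrite sumA in CU.
      rewrite (F_eq z Hz x Hx).
      assert ((RInt (sP z N) 0 x + RInt (sQ z N) x 1) * sP z N x <= (psi z x + uf z x) * F z x) by nra. nra.
Qed.

Definition Lim' (u : nat -> R) : R := real (Lim_seq u).

Lemma lim_incr (u : nat -> R) M : (forall n, u n <= u (S n)) -> (forall n, u n <= M) -> is_lim_seq u (Lim' u).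
Proof.
  intros H1 H2. pose proof (ex_finite_lim_seq_incr u M H1 H2) as E.
  pose proof (Lim_seq_correct' u E) as L.
  apply ex_finite_lim_seq_correct in E. destruct E as [_ Fi].
  exact L.
Qed.

Lemma lim_le_c (u : nat -> R) (l c : R) : is_lim_seq u l -> (forall n, u n <= c) -> l <= c.
Proof.
  intros H1 H2. pose proof (is_lim_seq_le u (fun _ => c) l c H2 H1 (is_lim_seq_const c)). exact H.
Qed.
Lemma lim_ge_c (u : nat -> R) (l c : R) : is_lim_seq u l -> (forall n, c <= u n) -> c <= l.
Proof.
  intros H1 H2. pose proof (is_lim_seq_le (fun _ => c) u c l H2 (is_lim_seq_const c) H1). exact H.
Qed.

Lemma lim_unique (u : nat -> R) (l1 l2 : R) : is_lim_seq u l1 -> is_lim_seq u l2 -> l1 = l2.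
Proof.
  intros H1 H2. apply is_lim_seq_unique in H1. apply is_lim_seq_unique in H2. rewrite H1 in H2. injection H2; auto.
Qed.

Lemma tail_bound (t : nat -> R) K rho : 0 < rho < 1 -> (forall n, 0 <= t n <= K * rho ^ n) ->
  forall N k, sum_f_R0 t (N + k) - sum_f_R0 t N <= K * rho ^ (S N) / (1 - rho).
Proof.
  intros Hr Ht N k.
  assert (G : sum_f_R0 t (N + k) - sum_f_R0 t N <= K * rho ^ (S N) * (1 - rho ^ k) / (1 - rho)).
  { induction k.
    - rewrite Nat.add_0_r. simpl. unfold Rdiv. rewrite Rminus_diag. lra.
    - rewrite Nat.add_succ_r, tech5. specialize (Ht (S (N + k))).
      replace (rho ^ S (N + k)) with (rho ^ S N * rho ^ k) in Ht by (rewrite <- pow_add; f_equal; lia).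
      assert (K * rho ^ S N * (1 - rho ^ S k) / (1 - rho) = K * rho ^ S N * (1 - rho ^ k) / (1 - rho) + K * (rho ^ S N * rho ^ k))
        by (simpl; field; lra).
      lra. }
  assert (0 <= K * rho ^ S N).
  { specialize (Ht 0%nat). simpl in Ht. assert (0 <= K) by lra. apply Rmult_le_pos; auto. apply pow_le; lra. }
  assert (0 < rho ^ k) by (apply pow_lt; lra).
  assert (K * rho ^ S N * (1 - rho ^ k) / (1 - rho) <= K * rho ^ S N / (1 - rho)).
  { unfold Rdiv. apply Rmult_le_compat_r. apply Rlt_le, Rinv_0_lt_compat; lra. nra. }
  lra.
Qed.

Lemma tail_lim (t : nat -> R) K rho (l : R) : 0 < rho < 1 -> (forall n, 0 <= t n <= K * rho ^ n) ->
  is_lim_seq (sum_f_R0 t) l -> forall N, l - sum_f_R0 t N <= K * rho ^ (S N) / (1 - rho).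
Proof.
  intros Hr Ht Hl N.
  apply (is_lim_seq_incr_n _ N) in Hl.
  pose proof (is_lim_seq_minus' _ _ _ _ Hl (is_lim_seq_const (sum_f_R0 t N))) as H2.
  apply (lim_le_c _ _ _ H2). intros n. rewrite Nat.add_comm. apply tail_bound; auto.
Qed.

Lemma eta_lim K rho : 0 < rho < 1 -> is_lim_seq (fun N => K * rho ^ (S N) / (1 - rho)) 0.
Proof.
  intros Hr. apply (proj1 (is_lim_seq_incr_1 (fun N => K * rho ^ N / (1 - rho)) 0)).
  apply (is_lim_seq_ext (fun N => (K / (1 - rho)) * rho ^ N)). intros; field; lra.
  replace (Finite 0) with (Rbar_mult (K / (1 - rho)) 0) by (simpl; f_equal; ring).
  apply is_lim_seq_scal_l. apply is_lim_seq_geom. rewrite Rabs_right; lra.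
Qed.

Lemma step_lemma (J : R -> R) C : 0 <= C -> J 0 = 0 -> (forall x, 0 <= x <= 1 -> 0 <= J x) ->
  (forall x y, 0 <= x -> x <= y -> y <= 1 -> J y <= J x + (y - x) * C * J y) ->
  forall y, 0 <= y <= 1 -> J y = 0.
Proof.
  intros HC H0 Hpos Hrel.
  set (hh := / (2 * (C + 1))).
  assert (Hh : 0 < hh) by (unfold hh; apply Rinv_0_lt_compat; lra).
  assert (HhC : hh * C <= / 2).
  { unfold hh. apply (Rmult_le_reg_l (2 * (C + 1))). lra.
    replace (2 * (C + 1) * (/ (2 * (C + 1)) * C)) with C by (field; lra). lra. }
  assert (Ind : forall k, forall y, 0 <= y <= 1 -> y <= INR k * hh -> J y = 0).
  { induction k; intros y Hy Hk.
    - simpl in Hk. replace y with 0 by lra. auto.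
    - rewrite S_INR, Rmult_plus_distr_r, Rmult_1_l in Hk. destruct (Rle_dec y (INR k * hh)). apply IHk; auto.
      apply Rnot_le_lt in n. set (x := INR k * hh). assert (0 <= x) by (unfold x; apply Rmult_le_pos; [apply pos_INR|lra]).
      assert (J x = 0) by (apply IHk; unfold x in *; lra).
      assert (Ex : x = INR k * hh) by reflexivity. specialize (Hrel x y ltac:(lra) ltac:(lra) ltac:(lra)). pose proof (Hpos y Hy).
      assert ((y - x) * C <= / 2). { apply Rle_trans with (hh * C); auto. apply Rmult_le_compat_r; auto. unfold x in *. lra. }
      nra. }
  intros y Hy. destruct (archimed_cor1 hh Hh) as [k [Hk Hk0]].
  apply (Ind k y Hy).
  assert (0 < INR k) by (apply lt_0_INR; lia).
  assert (1 <= INR k * hh).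
  { apply (Rmult_le_reg_l (/ INR k)). apply Rinv_0_lt_compat; auto.
    rewrite <- Rmult_assoc, Rinv_l, Rmult_1_l by lra. lra. }
  lra.
Qed.

Lemma alg_diff a b c d z : a = 1 + z * c * a -> b = 1 + z * d * b -> a - b = z * a * b * (c - d).
Proof. intros H1 H2. 
  assert (b * (a - (1 + z * c * a)) = 0) by (rewrite <- H1; ring).
  assert (a * (b - (1 + z * d * b)) = 0) by (rewrite <- H2; ring).
  nra. Qed.

Section Fixed.
Variable z : R.
Hypothesis Hz : 0 < z < / 4.

Definition z0 := (z + / 4) / 2.
Definition rho := z / z0.

Lemma z0_range : 0 < z0 < / 4.
Proof. unfold z0; lra. Qed.
Lemma rho_range : 0 < rho < 1.
Proof. unfold rho, z0. split. apply Rdiv_lt_0_compat; lra.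
  apply (Rmult_lt_reg_r ((z + / 4) / 2)). lra. unfold Rdiv. rewrite Rmult_assoc, Rinv_l; lra. Qed.

Lemma zpow n : z ^ n = z0 ^ n * rho ^ n.
Proof. rewrite <- Rpow_mult_distr. f_equal. unfold rho, z0. field. lra. Qed.

Definition KQ0 := KQ z0.
Definition KF0 := KF z0.

Lemma Qterm_bnd n x : 0 <= x <= 1 -> 0 <= Q n x * z ^ n <= KQ0 * rho ^ n.
Proof.
  intros Hx. split. apply Qterm_nonneg; lra.
  rewrite zpow, <- Rmult_assoc. apply Rmult_le_compat_r. apply pow_le; pose proof rho_range; lra.
  pose proof z0_range. apply Rle_trans with (sQ z0 n x).
  unfold sQ. apply (term_le_sum (fun n => Q n x * z0 ^ n)). intros; apply Qterm_nonneg; lra.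
  apply Rle_trans with (qf z0 x). apply bounds; auto. apply q_bnd; auto.
Qed.

Lemma Pterm_bnd n x : 0 <= x <= 1 -> 0 <= P n x * z ^ n <= KF0 * rho ^ n.
Proof.
  intros Hx. split. apply Pterm_nonneg; lra.
  rewrite zpow, <- Rmult_assoc. apply Rmult_le_compat_r. apply pow_le; pose proof rho_range; lra.
  pose proof z0_range. apply Rle_trans with (sP z0 n x).
  unfold sP. apply (term_le_sum (fun n => P n x * z0 ^ n)). intros; apply Pterm_nonneg; lra.
  apply Rle_trans with (F z0 x). apply bounds; auto. apply F_bnd; auto.
Qed.

Definition etaQ N := KQ0 * rho ^ (S N) / (1 - rho).
Definition etaP N := KF0 * rho ^ (S N) / (1 - rho).

Definition Lq x := Lim' (fun N => sQ z N x).
Definition Bq x := Lim' (fun N => RInt (sQ z N) x 1).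

Lemma UQ_bnd N x : 0 <= x <= 1 -> 0 <= RInt (sQ z N) x 1 <= uf z x.
Proof.
  intros Hx. destruct (ex_RInt_qf z x Hz Hx) as [Eq Vq]. split.
  apply RInt_nonneg. apply sQ_cont. lra. intros; apply sQ_nonneg; lra.
  rewrite <- Vq. apply RInt_le; auto. lra. apply Cont_exRInt, sQ_cont.
  intros t Ht. apply bounds; auto; lra.
Qed.

Lemma UQ_incr N x : 0 <= x <= 1 -> RInt (sQ z N) x 1 <= RInt (sQ z (S N)) x 1.
Proof. intros Hx. rewrite !RInt_sQ, tech5. pose proof (aQ_nonneg z (S N) x ltac:(lra) Hx). lra. Qed.

Lemma Lq_lim x : 0 <= x <= 1 -> is_lim_seq (fun N => sQ z N x) (Lq x).
Proof.
  intros Hx. apply (lim_incr _ (qf z x)). intros; apply sQ_mono; lra || lia.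
  intros; apply bounds; auto.
Qed.

Lemma Bq_lim x : 0 <= x <= 1 -> is_lim_seq (fun N => RInt (sQ z N) x 1) (Bq x).
Proof.
  intros Hx. apply (lim_incr _ (uf z x)). intros; apply UQ_incr; auto.
  intros; apply UQ_bnd; auto.
Qed.

Lemma Lq_eq x : 0 <= x <= 1 -> Lq x = 1 + z * Bq x * Lq x.
Proof.
  intros Hx. pose proof (Lq_lim x Hx) as HL. pose proof (Bq_lim x Hx) as HB.
  assert (IL : forall N, sQ z N x <= Lq x) by (intros; apply (is_lim_seq_incr_compare _ _ HL); intros; apply sQ_mono; lra || lia).
  assert (IB : forall N, RInt (sQ z N) x 1 <= Bq x) by (intros; apply (is_lim_seq_incr_compare _ _ HB); intros; apply UQ_incr; auto).
  assert (N0 : forall N, 0 <= sQ z N x) by (intros; apply sQ_nonneg; lra).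
  assert (U0 : forall N, 0 <= RInt (sQ z N) x 1) by (intros; apply UQ_bnd; auto).
  apply Rle_antisym.
  - apply (lim_le_c (fun N => sQ z (S N) x)). apply (is_lim_seq_incr_1 (fun N => sQ z N x)). auto.
    intros N. rewrite sQ_S.
    pose proof (conv_upper (fun m => RInt (Q m) x 1 * z ^ m) (fun k => sQ z k x) N
        (fun i => aQ_nonneg z i x ltac:(lra) Hx) (fun i j H => sQ_mono z x i j ltac:(lra) Hx H)) as CU.
    cbv beta in CU. rewrite <- RInt_sQ in CU.
    specialize (IL N). specialize (IB N). specialize (N0 N). specialize (U0 N).
    assert (RInt (sQ z N) x 1 * sQ z N x <= Bq x * Lq x) by (apply Rmult_le_compat; lra). nra.
  - apply (lim_le_c (fun M => 1 + z * RInt (sQ z M) x 1 * sQ z M x)).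
    apply is_lim_seq_plus'. apply is_lim_seq_const. apply is_lim_seq_mult'. 
    apply (is_lim_seq_scal_l _ z (Bq x)) in HB. exact HB. exact HL.
    intros M. apply Rle_trans with (sQ z (S (2 * M)) x); auto.
    rewrite sQ_S.
    pose proof (conv_lower (fun m => RInt (Q m) x 1 * z ^ m) (fun k => sQ z k x) (2 * M) M ltac:(lia)
        (fun i => aQ_nonneg z i x ltac:(lra) Hx) N0 (fun i j H => sQ_mono z x i j ltac:(lra) Hx H)) as CL.
    cbv beta in CL. rewrite <- RInt_sQ in CL. nra.
Qed.


Lemma exq a b : 0 <= a <= 1 -> 0 <= b <= 1 -> ex_RInt (qf z) a b.
Proof.
  intros Ha Hb. apply (@ex_RInt_continuous R_CompleteNormedModule). intros t Ht. apply qf_cont; auto.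
  split. apply Rle_trans with (Rmin a b); [apply Rmin_glb; lra| lra].
  apply Rle_trans with (Rmax a b); [lra| apply Rmax_lub; lra].
Qed.
Lemma exF a b : 0 <= a <= 1 -> 0 <= b <= 1 -> ex_RInt (F z) a b.
Proof.
  intros Ha Hb. apply (@ex_RInt_continuous R_CompleteNormedModule). intros t Ht. apply F_cont; auto.
  split. apply Rle_trans with (Rmin a b); [apply Rmin_glb; lra| lra].
  apply Rle_trans with (Rmax a b); [lra| apply Rmax_lub; lra].
Qed.

Definition jq x := uf z x - Bq x.
Definition Cq := z * KQ z * KQ z.

Lemma Bq_le x : 0 <= x <= 1 -> 0 <= Bq x <= uf z x.
Proof. intros Hx. split. apply (lim_ge_c _ _ _ (Bq_lim x Hx)). intros; apply UQ_bnd; auto.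
  apply (lim_le_c _ _ _ (Bq_lim x Hx)). intros; apply UQ_bnd; auto. Qed.

Lemma Lq_le x : 0 <= x <= 1 -> 0 <= Lq x <= qf z x.
Proof. intros Hx. split. apply (lim_ge_c _ _ _ (Lq_lim x Hx)). intros; apply sQ_nonneg; lra.
  apply (lim_le_c _ _ _ (Lq_lim x Hx)). intros; apply bounds; auto. Qed.

Lemma jq_nonneg x : 0 <= x <= 1 -> 0 <= jq x.
Proof. intros Hx. pose proof (Bq_le x Hx). unfold jq; lra. Qed.

Lemma e_bnd x : 0 <= x <= 1 -> qf z x - Lq x <= Cq * jq x.
Proof.
  intros Hx. rewrite (alg_diff (qf z x) (Lq x) (uf z x) (Bq x) z (q_eq z Hz x Hx) (Lq_eq x Hx)).
  fold (jq x). pose proof (q_bnd z Hz x Hx). pose proof (Lq_le x Hx). pose proof (jq_nonneg x Hx).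
  unfold Cq. assert (qf z x * Lq x <= KQ z * KQ z) by (apply Rmult_le_compat; lra).
  assert (0 <= z * jq x) by (apply Rmult_le_pos; lra). nra.
Qed.

Lemma Lq_tail N t : 0 <= t <= 1 -> Lq t - sQ z N t <= etaQ N.
Proof.
  intros Ht. unfold etaQ, sQ. apply (tail_lim (fun n => Q n t * z ^ n) KQ0 rho). apply rho_range.
  intros; apply Qterm_bnd; auto. apply Lq_lim; auto.
Qed.

Lemma DQ_eq N x y : 0 <= x -> x <= y -> y <= 1 ->
  (uf z x - RInt (sQ z N) x 1) - (uf z y - RInt (sQ z N) y 1) = RInt (qf z) x y - RInt (sQ z N) x y.
Proof.
  intros. destruct (ex_RInt_qf z x Hz ltac:(lra)) as [_ V1]. destruct (ex_RInt_qf z y Hz ltac:(lra)) as [_ V2].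
  rewrite <- V1, <- V2.
  rewrite <- (RInt_Chasles (qf z) x y 1), <- (RInt_Chasles (sQ z N) x y 1).
  unfold plus; simpl. ring.
  apply Cont_exRInt, sQ_cont. apply Cont_exRInt, sQ_cont. apply exq; lra. apply exq; lra.
Qed.

Lemma DQ_lim x y : 0 <= x -> x <= y -> y <= 1 ->
  is_lim_seq (fun N => RInt (qf z) x y - RInt (sQ z N) x y) (jq x - jq y).
Proof.
  intros. apply (is_lim_seq_ext (fun N => (uf z x - RInt (sQ z N) x 1) - (uf z y - RInt (sQ z N) y 1))).
  intros; apply DQ_eq; auto. unfold jq.
  apply is_lim_seq_minus'; apply is_lim_seq_minus'; try apply is_lim_seq_const; apply Bq_lim; lra.
Qed.

Lemma jq_mono x y : 0 <= x -> x <= y -> y <= 1 -> jq y <= jq x.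
Proof.
  intros. cut (0 <= jq x - jq y). lra.
  apply (lim_ge_c _ _ _ (DQ_lim x y H H0 H1)). intros N.
  cut (RInt (sQ z N) x y <= RInt (qf z) x y). lra.
  apply RInt_le; auto. apply Cont_exRInt, sQ_cont. apply exq; lra. intros; apply bounds; auto; lra.
Qed.

Lemma jq_rel x y : 0 <= x -> x <= y -> y <= 1 -> jq x <= jq y + (y - x) * Cq * jq x.
Proof.
  intros. cut (jq x - jq y <= (y - x) * Cq * jq x). lra.
  assert (HC : 0 <= Cq). { unfold Cq. pose proof (q_bnd z Hz 0 ltac:(lra)). apply Rmult_le_pos; [apply Rmult_le_pos|]; lra. }
  assert (Hb : is_lim_seq (fun N => (y - x) * (Cq * jq x + etaQ N)) ((y - x) * (Cq * jq x + 0))).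
  { apply (is_lim_seq_scal_l _ (y - x) (Cq * jq x + 0)). apply is_lim_seq_plus'. apply is_lim_seq_const.
    unfold etaQ. apply eta_lim. apply rho_range. }
  assert (Pw : forall N, RInt (qf z) x y - RInt (sQ z N) x y <= (y - x) * (Cq * jq x + etaQ N)).
  { intros N.
    assert (E : RInt (fun t => sQ z N t + (Cq * jq x + etaQ N)) x y = RInt (sQ z N) x y + (y - x) * (Cq * jq x + etaQ N)).
    { transitivity (RInt (fun t => plus (sQ z N t) (Cq * jq x + etaQ N)) x y). reflexivity.
      rewrite (@RInt_plus R_CompleteNormedModule (sQ z N) (fun _ => Cq * jq x + etaQ N)).
      rewrite RInt_const. unfold plus, scal; simpl; unfold mult; simpl. ring.
      apply Cont_exRInt, sQ_cont. apply Cont_exRInt, Cont_const. }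
    cut (RInt (qf z) x y <= RInt (fun t => sQ z N t + (Cq * jq x + etaQ N)) x y). lra.
    apply RInt_le; auto. apply exq; lra. apply Cont_exRInt, Cont_plus. apply sQ_cont. apply Cont_const.
    intros t Ht. pose proof (e_bnd t ltac:(lra)). pose proof (Lq_tail N t ltac:(lra)).
    pose proof (jq_mono x t ltac:(lra) ltac:(lra) ltac:(lra)). nra. }
  pose proof (is_lim_seq_le _ _ _ _ Pw (DQ_lim x y H H0 H1) Hb) as L.
  simpl in L. replace ((y - x) * Cq * jq x) with ((y - x) * (Cq * jq x + 0)) by ring. exact L.
Qed.

Lemma jq_zero x : 0 <= x <= 1 -> jq x = 0.
Proof.
  intros Hx. replace x with (1 - (1 - x)) by ring.
  apply (step_lemma (fun s => jq (1 - s)) Cq).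
  - unfold Cq. pose proof (q_bnd z Hz 0 ltac:(lra)). apply Rmult_le_pos; [apply Rmult_le_pos|]; lra.
  - replace (1 - 0) with 1 by ring. unfold jq. rewrite uf_1.
    pose proof (Bq_lim 1 ltac:(lra)) as L.
    assert (Bq 1 = 0). { apply (lim_unique (fun N => RInt (sQ z N) 1 1)); auto.
      apply (is_lim_seq_ext (fun _ => 0)). intros; rewrite RInt_point; auto. apply is_lim_seq_const. }
    lra.
  - intros s Hs. apply jq_nonneg; lra.
  - intros s s' Hs Hss Hs'. pose proof (jq_rel (1 - s') (1 - s) ltac:(lra) ltac:(lra) ltac:(lra)).
    replace (s' - s) with (1 - s - (1 - s')) by ring. lra.
  - lra.
Qed.

Lemma Bq_uf x : 0 <= x <= 1 -> Bq x = uf z x.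
Proof. intros Hx. pose proof (jq_zero x Hx). unfold jq in H; lra. Qed.


Definition Lp x := Lim' (fun N => sP z N x).
Definition Ap x := Lim' (fun N => RInt (sP z N) 0 x).

Lemma VP_bnd N x : 0 <= x <= 1 -> 0 <= RInt (sP z N) 0 x <= psi z x.
Proof.
  intros Hx. destruct (ex_RInt_F z x Hz Hx) as [Eq Vq]. split.
  apply RInt_nonneg. apply sP_cont. lra. intros; apply sP_nonneg; lra.
  rewrite <- Vq. apply RInt_le; auto. lra. apply Cont_exRInt, sP_cont.
  intros t Ht. apply bounds; auto; lra.
Qed.

Lemma VP_incr N x : 0 <= x <= 1 -> RInt (sP z N) 0 x <= RInt (sP z (S N)) 0 x.
Proof. intros Hx. rewrite !RInt_sP, tech5. 
  assert (0 <= RInt (P (S N)) 0 x * z ^ S N).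
  { apply Rmult_le_pos. apply RInt_nonneg. apply P_cont. lra. intros; apply P_nonneg; lra. apply pow_le; lra. }
  lra. Qed.

Lemma Lp_lim x : 0 <= x <= 1 -> is_lim_seq (fun N => sP z N x) (Lp x).
Proof.
  intros Hx. apply (lim_incr _ (F z x)). intros; apply sP_mono; lra || lia.
  intros; apply bounds; auto.
Qed.

Lemma Ap_lim x : 0 <= x <= 1 -> is_lim_seq (fun N => RInt (sP z N) 0 x) (Ap x).
Proof.
  intros Hx. apply (lim_incr _ (psi z x)). intros; apply VP_incr; auto.
  intros; apply VP_bnd; auto.
Qed.

Lemma Lp_eq x : 0 <= x <= 1 -> Lp x = 1 + z * (Ap x + Bq x) * Lp x.
Proof.
  intros Hx. pose proof (Lp_lim x Hx) as HL.
  assert (HB : is_lim_seq (fun N => RInt (sP z N) 0 x + RInt (sQ z N) x 1) (Ap x + Bq x)).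
  { apply is_lim_seq_plus'. apply Ap_lim; auto. apply Bq_lim; auto. }
  assert (Hincr : forall N, RInt (sP z N) 0 x + RInt (sQ z N) x 1 <= RInt (sP z (S N)) 0 x + RInt (sQ z (S N)) x 1).
  { intros. pose proof (VP_incr N x Hx). pose proof (UQ_incr N x Hx). lra. }
  assert (IL : forall N, sP z N x <= Lp x) by (intros; apply (is_lim_seq_incr_compare _ _ HL); intros; apply sP_mono; lra || lia).
  assert (IB : forall N, RInt (sP z N) 0 x + RInt (sQ z N) x 1 <= Ap x + Bq x) by (intros; apply (is_lim_seq_incr_compare _ _ HB); auto).
  assert (N0 : forall N, 0 <= sP z N x) by (intros; apply sP_nonneg; lra).
  assert (U0 : forall N, 0 <= RInt (sP z N) 0 x + RInt (sQ z N) x 1).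
  { intros. pose proof (VP_bnd N x Hx). pose proof (UQ_bnd N x Hx). lra. }
  apply Rle_antisym.
  - apply (lim_le_c (fun N => sP z (S N) x)). apply (is_lim_seq_incr_1 (fun N => sP z N x)). auto.
    intros N. rewrite sP_S.
    pose proof (conv_upper (fun m => (RInt (P m) 0 x + RInt (Q m) x 1) * z ^ m) (fun k => sP z k x) N
        (fun i => aP_nonneg z i x ltac:(lra) Hx) (fun i j H => sP_mono z x i j ltac:(lra) Hx H)) as CU.
    cbv beta in CU. rewrite sumA in CU.
    specialize (IL N). specialize (IB N). specialize (N0 N). specialize (U0 N).
    assert ((RInt (sP z N) 0 x + RInt (sQ z N) x 1) * sP z N x <= (Ap x + Bq x) * Lp x) by (apply Rmult_le_compat; lra). nra.
  - apply (lim_le_c (fun M => 1 + z * (RInt (sP z M) 0 x + RInt (sQ z M) x 1) * sP z M x)).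
    apply is_lim_seq_plus'. apply is_lim_seq_const. apply is_lim_seq_mult'. 
    apply (is_lim_seq_scal_l _ z (Ap x + Bq x)) in HB. exact HB. exact HL.
    intros M. apply Rle_trans with (sP z (S (2 * M)) x); auto.
    rewrite sP_S.
    pose proof (conv_lower (fun m => (RInt (P m) 0 x + RInt (Q m) x 1) * z ^ m) (fun k => sP z k x) (2 * M) M ltac:(lia)
        (fun i => aP_nonneg z i x ltac:(lra) Hx) N0 (fun i j H => sP_mono z x i j ltac:(lra) Hx H)) as CL.
    cbv beta in CL. rewrite sumA in CL. nra.
Qed.

Definition JP x := psi z x - Ap x.
Definition Cp := z * KF z * KF z.

Lemma Lp_le x : 0 <= x <= 1 -> 0 <= Lp x <= F z x.
Proof. intros Hx. split. apply (lim_ge_c _ _ _ (Lp_lim x Hx)). intros; apply sP_nonneg; lra.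
  apply (lim_le_c _ _ _ (Lp_lim x Hx)). intros; apply bounds; auto. Qed.

Lemma JP_nonneg x : 0 <= x <= 1 -> 0 <= JP x.
Proof. intros Hx. unfold JP. cut (Ap x <= psi z x). lra.
  apply (lim_le_c _ _ _ (Ap_lim x Hx)). intros; apply VP_bnd; auto. Qed.

Lemma E_bnd x : 0 <= x <= 1 -> F z x - Lp x <= Cp * JP x.
Proof.
  intros Hx. assert (Lp x = 1 + z * (Ap x + uf z x) * Lp x) by (rewrite <- Bq_uf by auto; apply Lp_eq; auto).
  rewrite (alg_diff (F z x) (Lp x) (psi z x + uf z x) (Ap x + uf z x) z (F_eq z Hz x Hx) H).
  replace (psi z x + uf z x - (Ap x + uf z x)) with (JP x) by (unfold JP; ring).
  pose proof (F_bnd z Hz x Hx). pose proof (Lp_le x Hx). pose proof (JP_nonneg x Hx).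
  unfold Cp. assert (F z x * Lp x <= KF z * KF z) by (apply Rmult_le_compat; lra).
  assert (0 <= z * JP x) by (apply Rmult_le_pos; lra). nra.
Qed.

Lemma Lp_tail N t : 0 <= t <= 1 -> Lp t - sP z N t <= etaP N.
Proof.
  intros Ht. unfold etaP, sP. apply (tail_lim (fun n => P n t * z ^ n) KF0 rho). apply rho_range.
  intros; apply Pterm_bnd; auto. apply Lp_lim; auto.
Qed.

Lemma DP_eq N x y : 0 <= x -> x <= y -> y <= 1 ->
  (psi z y - RInt (sP z N) 0 y) - (psi z x - RInt (sP z N) 0 x) = RInt (F z) x y - RInt (sP z N) x y.
Proof.
  intros. destruct (ex_RInt_F z x Hz ltac:(lra)) as [_ V1]. destruct (ex_RInt_F z y Hz ltac:(lra)) as [_ V2].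
  rewrite <- V1, <- V2.
  rewrite <- (RInt_Chasles (F z) 0 x y), <- (RInt_Chasles (sP z N) 0 x y).
  unfold plus; simpl. ring.
  apply Cont_exRInt, sP_cont. apply Cont_exRInt, sP_cont. apply exF; lra. apply exF; lra.
Qed.

Lemma DP_lim x y : 0 <= x -> x <= y -> y <= 1 ->
  is_lim_seq (fun N => RInt (F z) x y - RInt (sP z N) x y) (JP y - JP x).
Proof.
  intros. apply (is_lim_seq_ext (fun N => (psi z y - RInt (sP z N) 0 y) - (psi z x - RInt (sP z N) 0 x))).
  intros; apply DP_eq; auto. unfold JP.
  apply is_lim_seq_minus'; apply is_lim_seq_minus'; try apply is_lim_seq_const; apply Ap_lim; lra.
Qed.

Lemma JP_mono x y : 0 <= x -> x <= y -> y <= 1 -> JP x <= JP y.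
Proof.
  intros. cut (0 <= JP y - JP x). lra.
  apply (lim_ge_c _ _ _ (DP_lim x y H H0 H1)). intros N.
  cut (RInt (sP z N) x y <= RInt (F z) x y). lra.
  apply RInt_le; auto. apply Cont_exRInt, sP_cont. apply exF; lra. intros; apply bounds; auto; lra.
Qed.

Lemma JP_rel x y : 0 <= x -> x <= y -> y <= 1 -> JP y <= JP x + (y - x) * Cp * JP y.
Proof.
  intros. cut (JP y - JP x <= (y - x) * Cp * JP y). lra.
  assert (HC : 0 <= Cp). { unfold Cp. pose proof (F_bnd z Hz 0 ltac:(lra)). apply Rmult_le_pos; [apply Rmult_le_pos|]; lra. }
  assert (Hb : is_lim_seq (fun N => (y - x) * (Cp * JP y + etaP N)) ((y - x) * (Cp * JP y + 0))).
  { apply (is_lim_seq_scal_l _ (y - x) (Cp * JP y + 0)). apply is_lim_seq_plus'. apply is_lim_seq_const.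
    unfold etaP. apply eta_lim. apply rho_range. }
  assert (Pw : forall N, RInt (F z) x y - RInt (sP z N) x y <= (y - x) * (Cp * JP y + etaP N)).
  { intros N.
    assert (E : RInt (fun t => sP z N t + (Cp * JP y + etaP N)) x y = RInt (sP z N) x y + (y - x) * (Cp * JP y + etaP N)).
    { transitivity (RInt (fun t => plus (sP z N t) (Cp * JP y + etaP N)) x y). reflexivity.
      rewrite (@RInt_plus R_CompleteNormedModule (sP z N) (fun _ => Cp * JP y + etaP N)).
      rewrite RInt_const. unfold plus, scal; simpl; unfold mult; simpl. ring.
      apply Cont_exRInt, sP_cont. apply Cont_exRInt, Cont_const. }
    cut (RInt (F z) x y <= RInt (fun t => sP z N t + (Cp * JP y + etaP N)) x y). lra.
    apply RInt_le; auto. apply exF; lra. apply Cont_exRInt, Cont_plus. apply sP_cont. apply Cont_const.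
    intros t Ht. pose proof (E_bnd t ltac:(lra)). pose proof (Lp_tail N t ltac:(lra)).
    pose proof (JP_mono t y ltac:(lra) ltac:(lra) ltac:(lra)). nra. }
  pose proof (is_lim_seq_le _ _ _ _ Pw (DP_lim x y H H0 H1) Hb) as L.
  simpl in L. replace ((y - x) * Cp * JP y) with ((y - x) * (Cp * JP y + 0)) by ring. exact L.
Qed.

Lemma JP_zero x : 0 <= x <= 1 -> JP x = 0.
Proof.
  intros Hx.
  apply (step_lemma JP Cp).
  - unfold Cp. pose proof (F_bnd z Hz 0 ltac:(lra)). apply Rmult_le_pos; [apply Rmult_le_pos|]; lra.
  - unfold JP. rewrite psi_0; auto.
    pose proof (Ap_lim 0 ltac:(lra)) as L.
    assert (Ap 0 = 0). { apply (lim_unique (fun N => RInt (sP z N) 0 0)); auto.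
      apply (is_lim_seq_ext (fun _ => 0)). intros; rewrite RInt_point; auto. apply is_lim_seq_const. }
    lra.
  - intros s Hs. apply JP_nonneg; lra.
  - intros s s' Hs Hss Hs'. apply JP_rel; auto.
  - auto.
Qed.

Lemma series_F x : 0 <= x <= 1 -> is_lim_seq (fun N => sP z N x) (F z x).
Proof.
  intros Hx. assert (Lp x = F z x).
  { pose proof (E_bnd x Hx). rewrite JP_zero in H by auto. pose proof (Lp_le x Hx). lra. }
  rewrite <- H. apply Lp_lim; auto.
Qed.

End Fixed.

Theorem mainTheorem5 (z x : R) (hz : 0 < z < / 4) (hx : 0 <= x <= 1) :
  infinite_sum (fun n => P n x * z ^ n)
    (/ (sqrt (2 * z * x + 1 - 2 * z)
        * Sinv (sqrt ((2 * z * x + 1 - 2 * z) / (1 - 2 * z))))).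
Proof.
  pose proof (series_F z hz x hx) as L. apply is_lim_seq_Reals in L.
  exact L.
Qed.
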